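(* Let $\alpha\in\mathbb{Z}_{>0}$, $\beta\in\mathbb{R}_{>0}$, $\gamma\in\mathbb{R}$, and let $(a_n)_n$ be a sequence with asymptotic expansion \[ a_n \approx n^{\alpha n}\beta^n n^\gamma\,\tilde A(n^{-1}) \] for some nonzero formal power series $\tilde A(z)$. For $j\in\mathbb{Z}_{\geq 0}$ define the formal power series \[ \tilde A_j(z) = e^{-\alpha j}\beta^{-j} z^{\alpha j}(1-jz)^{\gamma-\alpha j}\, e^{\alpha z^{-1}(\log(1-jz)+jz)}\,\tilde A\!\left(\frac{z}{1-jz}\right). \] Then for any fixed $j\in\mathbb{Z}_{\geq 0}$, as $n\to\infty$, \[ a_{n-j} \approx n^{\alpha n}\beta^n n^\gamma\,\tilde A_j(n^{-1}). \]
   Context: For a formal power series $\tilde F(z)$, $f_n \approx b_n\tilde F(n^{-1})$ means that for every fixed $r\geq 0$, $f_n = b_n\big(\sum_{\ell=0}^{r-1}[z^\ell]\tilde F(z)\,n^{-\ell} + O(n^{-r})\big)$ as $n\to\infty$. *)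

(* Defs.v *)
From Stdlib Require Import Reals Lra Factorial.
Open Scope R_scope.

Definition fps := nat -> R.

Definition fps_const (c : R) : fps := fun n => if Nat.eqb n 0 then c else 0.
Definition fps_X : fps := fun n => if Nat.eqb n 1 then 1 else 0.
Definition fps_add (f g : fps) : fps := fun n => f n + g n.
Definition fps_scale (c : R) (f : fps) : fps := fun n => c * f n.
Definition fps_mul (f g : fps) : fps :=
  fun n => sum_f_R0 (fun k => f k * g (n - k)%nat) n.
Fixpoint fps_pow (f : fps) (m : nat) : fps :=
  match m with
  | O => fps_const 1
  | S m' => fps_mul f (fps_pow f m')
  end.
(* composition f(g(z)); meaningful when g 0 = 0 (then g^m has valuation >= m,
   so only m <= n contribute to the n-th coefficient) *)
Definition fps_comp (f g : fps) : fps :=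
  fun n => sum_f_R0 (fun m => f m * fps_pow g m n) n.
Definition fps_Xpow (k : nat) (f : fps) : fps :=
  fun n => if (k <=? n)%nat then f (n - k)%nat else 0.
(* f(z)/z, meaningful when f 0 = 0 *)
Definition fps_divX (f : fps) : fps := fun n => f (S n).

Definition exp_series : fps := fun m => / INR (fact m).
Definition fps_exp (g : fps) : fps := fps_comp exp_series g.

Definition log1p_series : fps :=
  fun k => match k with O => 0 | S k' => (-1) ^ k' / INR k end.
Definition fps_log1p (g : fps) : fps := fps_comp log1p_series g.

Fixpoint falling (c : R) (k : nat) : R :=
  match k with
  | O => 1
  | S k' => falling c k' * (c - INR k')
  end.
Definition gbinom (c : R) (k : nat) : R := falling c k / INR (fact k).
Definition binom_series (c : R) : fps := fun k => gbinom c k.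
Definition fps_rpow1p (g : fps) (c : R) : fps := fps_comp (binom_series c) g.

Fixpoint trunc_eval (F : fps) (x : R) (r : nat) : R :=
  match r with
  | O => 0
  | S r' => trunc_eval F x r' + F r' * x ^ r'
  end.

Definition asymp_expansion (f b : nat -> R) (F : fps) : Prop :=
  forall r : nat, exists C : R, exists N : nat, forall n : nat, (N <= n)%nat ->
    Rabs (f n - b n * trunc_eval F (/ INR n) r) <= C * Rabs (b n) * (/ INR n) ^ r.

Definition scale_seq (alpha : nat) (beta gamma : R) : nat -> R :=
  fun n => INR n ^ (alpha * n) * beta ^ n * Rpower (INR n) gamma.

(* A_j(z) = e^{-alpha j} beta^{-j} z^{alpha j} (1 - j z)^{gamma - alpha j}
            * exp( alpha z^{-1} (log(1 - j z) + j z) ) * A( z / (1 - j z) ) *)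
Definition A_shift (alpha : nat) (beta gamma : R) (A : fps) (j : nat) : fps :=
  let mjz := fps_scale (- INR j) fps_X in
  fps_scale (exp (- (INR alpha * INR j)) * / beta ^ j)
    (fps_Xpow (alpha * j)
      (fps_mul (fps_rpow1p mjz (gamma - INR alpha * INR j))
        (fps_mul
          (fps_exp (fps_scale (INR alpha)
                      (fps_divX (fps_add (fps_log1p mjz) (fps_scale (INR j) fps_X)))))
          (fps_comp A (fps_mul fps_X (fps_rpow1p mjz (-1))))))).

(* Main.v *)
Require Import Defs.
From Stdlib Require Import Reals Lra Lia FunctionalExtensionality Factorial.
Open Scope R_scope.

Definition boD (D : R -> Prop) (r : nat) (h : R -> R) : Prop :=
  exists C d, 0 < d /\ forall x, Rabs x < d -> D x -> Rabs (h x) <= C * Rabs x ^ r.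

Lemma bo_pos D r h : boD D r h ->
  exists C d, 0 < d /\ 0 <= C /\ forall x, Rabs x < d -> D x -> Rabs (h x) <= C * Rabs x ^ r.
Proof.
  intros [C [d [Hd H]]]. exists (Rmax C 0), d. split; [lra|split; [apply Rmax_r|]].
  intros x Hx Dx. eapply Rle_trans; [apply H; auto|].
  apply Rmult_le_compat_r; [apply pow_le, Rabs_pos| apply Rmax_l].
Qed.

Lemma bo_ext D r h g : (forall x, h x = g x) -> boD D r h -> boD D r g.
Proof. intros E [C [d [Hd H]]]. exists C, d. split; auto. intros x Hx Dx. rewrite <- E. auto. Qed.

Lemma bo_extD D r h g : (forall x, D x -> h x = g x) -> boD D r h -> boD D r g.
Proof. intros E [C [d [Hd H]]]. exists C, d. split; auto. intros x Hx Dx. rewrite <- E; auto. Qed.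

Lemma bo_weakD (D D' : R -> Prop) r h : (forall x, D' x -> D x) -> boD D r h -> boD D' r h.
Proof. intros E [C [d [Hd H]]]. exists C, d. split; auto. Qed.

Lemma bo_add D r h g : boD D r h -> boD D r g -> boD D r (fun x => h x + g x).
Proof.
  intros [C1 [d1 [H1 B1]]] [C2 [d2 [H2 B2]]]. exists (C1 + C2), (Rmin d1 d2).
  split; [apply Rmin_pos; auto|]. intros x Hx Dx.
  pose proof (Rmin_l d1 d2); pose proof (Rmin_r d1 d2).
  eapply Rle_trans; [apply Rabs_triang|].
  specialize (B1 x ltac:(lra) Dx). specialize (B2 x ltac:(lra) Dx). nra.
Qed.

Lemma bo_scal D r h c : boD D r h -> boD D r (fun x => c * h x).
Proof.
  intros Hb. destruct (bo_pos _ _ _ Hb) as [C [d [Hd [HC B]]]].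
  exists (Rabs c * C), d. split; auto. intros x Hx Dx. rewrite Rabs_mult.
  rewrite Rmult_assoc. apply Rmult_le_compat_l; [apply Rabs_pos|auto].
Qed.

Lemma bo_opp D r h : boD D r h -> boD D r (fun x => - h x).
Proof. intros H. apply (bo_ext _ _ (fun x => -1 * h x)); [intros; ring|]. now apply bo_scal. Qed.

Lemma bo_sub D r h g : boD D r h -> boD D r g -> boD D r (fun x => h x - g x).
Proof. intros H G. apply (bo_add _ _ _ _ H (bo_opp _ _ _ G)). Qed.

Lemma bo_mul D r k h g : boD D r h -> boD D k g -> boD D (r + k) (fun x => h x * g x).
Proof.
  intros Hh Hg. destruct (bo_pos _ _ _ Hh) as [C1 [d1 [H1 [P1 B1]]]].
  destruct (bo_pos _ _ _ Hg) as [C2 [d2 [H2 [P2 B2]]]].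
  exists (C1 * C2), (Rmin d1 d2). split; [apply Rmin_pos; auto|]. intros x Hx Dx.
  pose proof (Rmin_l d1 d2); pose proof (Rmin_r d1 d2).
  specialize (B1 x ltac:(lra) Dx). specialize (B2 x ltac:(lra) Dx).
  rewrite Rabs_mult, pow_add.
  replace (C1 * C2 * (Rabs x ^ r * Rabs x ^ k)) with ((C1 * Rabs x ^ r) * (C2 * Rabs x ^ k)) by ring.
  apply Rmult_le_compat; auto using Rabs_pos.
Qed.

Lemma pow_le_mono_small (y : R) (k r : nat) : 0 <= y <= 1 -> (k <= r)%nat -> y ^ r <= y ^ k.
Proof.
  intros Hy Hk. induction Hk; [lra|]. simpl.
  pose proof (pow_le y m (proj1 Hy)). nra.
Qed.

Lemma bo_mono D r k h : boD D r h -> (k <= r)%nat -> boD D k h.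
Proof.
  intros Hh Hk. destruct (bo_pos _ _ _ Hh) as [C [d [H1 [P1 B1]]]].
  exists C, (Rmin d 1). split; [apply Rmin_pos; lra|]. intros x Hx Dx.
  pose proof (Rmin_l d 1); pose proof (Rmin_r d 1).
  eapply Rle_trans; [apply B1; auto; lra|]. apply Rmult_le_compat_l; auto.
  apply pow_le_mono_small; auto. split; [apply Rabs_pos|lra].
Qed.

Lemma bo_const D c : boD D 0 (fun _ => c).
Proof. exists (Rabs c), 1. split; [lra|]. intros. simpl. lra. Qed.

Lemma bo_powx D k : boD D k (fun x => x ^ k).
Proof. exists 1, 1. split; [lra|]. intros. rewrite <- RPow_abs. lra. Qed.

Lemma bo_zero D r : boD D r (fun _ => 0).
Proof. exists 0, 1. split; [lra|]. intros. rewrite Rabs_R0. lra. Qed.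

Lemma bo_mul0 D r h g : boD D r h -> boD D 0 g -> boD D r (fun x => h x * g x).
Proof. intros H G. rewrite <- (Nat.add_0_r r). now apply bo_mul. Qed.

Fixpoint sumn (f : nat -> R) (k : nat) : R :=
  match k with O => 0 | S k' => sumn f k' + f k' end.

Lemma sumn_ext f g k : (forall i, (i < k)%nat -> f i = g i) -> sumn f k = sumn g k.
Proof. induction k; simpl; intros; auto. rewrite IHk, H; auto. Qed.

Lemma sumn_add f g k : sumn (fun i => f i + g i) k = sumn f k + sumn g k.
Proof. induction k; simpl; [ring|rewrite IHk; ring]. Qed.

Lemma sumn_scal c f k : c * sumn f k = sumn (fun i => c * f i) k.
Proof. induction k; simpl; [ring|rewrite <- IHk; ring]. Qed.

Lemma sumn_swap (a : nat -> nat -> R) m n :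
  sumn (fun i => sumn (fun j => a i j) n) m = sumn (fun j => sumn (fun i => a i j) m) n.
Proof.
  induction m; simpl.
  - induction n; simpl; auto. rewrite <- IHn. ring.
  - rewrite IHm. rewrite <- sumn_add. reflexivity.
Qed.

Lemma sumn_zero_tail f k n : (k <= n)%nat -> (forall i, (k <= i < n)%nat -> f i = 0) ->
  sumn f n = sumn f k.
Proof.
  induction 1; intros; auto. simpl. rewrite IHle, H0; [ring|lia|]. intros; apply H0; lia.
Qed.

Lemma sum_f_R0_sumn f n : sum_f_R0 f n = sumn f (S n).
Proof. induction n as [|n IH]; [simpl; ring|]. change (sum_f_R0 f n + f (S n) = sumn f (S n) + f (S n)). rewrite IH. reflexivity. Qed.

Lemma T_sumn F x r : trunc_eval F x r = sumn (fun i => F i * x ^ i) r.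
Proof. induction r; simpl; auto. rewrite IHr; auto. Qed.

Lemma T_ext F G x r : (forall n, (n < r)%nat -> F n = G n) -> trunc_eval F x r = trunc_eval G x r.
Proof. intros. rewrite !T_sumn. apply sumn_ext. intros. rewrite H; auto. Qed.

Lemma T_add F G x r : trunc_eval (fps_add F G) x r = trunc_eval F x r + trunc_eval G x r.
Proof. induction r; simpl; [ring|]. rewrite IHr. unfold fps_add. ring. Qed.

Lemma T_scale c F x r : trunc_eval (fps_scale c F) x r = c * trunc_eval F x r.
Proof. induction r; simpl; [ring|]. rewrite IHr. unfold fps_scale. ring. Qed.

Lemma T_at0 F r : trunc_eval F 0 (S r) = F 0%nat.
Proof. induction r; [simpl; ring|]. change (trunc_eval F 0 (S r) + F (S r) * 0 ^ (S r) = F 0%nat).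
  rewrite IHr. simpl. ring. Qed.

Lemma T_divX F x r : trunc_eval F x (S r) = F 0%nat + x * trunc_eval (fps_divX F) x r.
Proof. induction r; [simpl; ring|]. change (trunc_eval F x (S r) + F (S r) * x ^ (S r) =
  F 0%nat + x * (trunc_eval (fps_divX F) x r + fps_divX F r * x ^ r)).
  rewrite IHr. unfold fps_divX. simpl. ring. Qed.

Lemma T_Xpow_low k F x r : (r <= k)%nat -> trunc_eval (fps_Xpow k F) x r = 0.
Proof. induction r; simpl; intros; auto. rewrite IHr; [|lia]. unfold fps_Xpow.
  destruct (Nat.leb_spec k r); [lia|ring]. Qed.

Lemma T_Xpow_high k F x m : trunc_eval (fps_Xpow k F) x (k + m) = x ^ k * trunc_eval F x m.
Proof. induction m.
  - rewrite Nat.add_0_r, T_Xpow_low; simpl; auto; ring.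
  - rewrite Nat.add_succ_r. simpl. rewrite IHm. unfold fps_Xpow.
    destruct (Nat.leb_spec k (k+m)); [|lia]. replace (k + m - k)%nat with m by lia.
    rewrite pow_add. ring. Qed.

Lemma bo_sumn D r (t : nat -> R -> R) k : (forall i, (i < k)%nat -> boD D r (t i)) ->
  boD D r (fun x => sumn (fun i => t i x) k).
Proof. induction k; simpl; intros. apply bo_zero. apply bo_add; auto. Qed.

Lemma bo_sum D r (t : nat -> R -> R) k : (forall i, (i <= k)%nat -> boD D r (t i)) ->
  boD D r (fun x => sum_f_R0 (fun i => t i x) k).
Proof. intros. eapply bo_ext; [intros; symmetry; apply sum_f_R0_sumn|]. apply bo_sumn; intros; apply H; lia. Qed.

Lemma bo_tail D F r k : (k <= r)%nat -> boD D k (fun x => trunc_eval F x r - trunc_eval F x k).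
Proof.
  induction 1. eapply bo_ext; [|apply bo_zero]. intros; simpl; ring.
  eapply bo_ext; [|apply bo_add; [apply IHle| apply bo_mono with (r := m); [apply (bo_scal D m (fun x => x ^ m) (F m)), bo_powx|auto]]].
  intros; simpl; ring.
Qed.

Lemma bo_T D F r : boD D 0 (fun x => trunc_eval F x r).
Proof. eapply bo_ext; [|apply (bo_tail D F r 0); lia]. intros; simpl; ring. Qed.

Definition asyD (D : R -> Prop) (f : R -> R) (F : fps) : Prop :=
  forall r, boD D r (fun x => f x - trunc_eval F x r).

Lemma asy_bounded D f F : asyD D f F -> boD D 0 f.
Proof. intros H. eapply bo_ext; [|apply (H 0%nat)]. intros; simpl; ring. Qed.

Lemma asy_ext D f g F G : (forall x, f x = g x) -> (forall n, F n = G n) -> asyD D f F -> asyD D g G.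
Proof. intros E1 E2 H r. eapply bo_ext; [|apply (H r)]. intros. rewrite <- E1. rewrite (T_ext F G); auto. Qed.

Lemma asy_weakD (D D' : R -> Prop) f F : (forall x, D' x -> D x) -> asyD D f F -> asyD D' f F.
Proof. intros E H r. eapply bo_weakD; eauto. Qed.

Lemma asy_add D f g F G : asyD D f F -> asyD D g G -> asyD D (fun x => f x + g x) (fps_add F G).
Proof. intros H1 H2 r. eapply bo_ext; [|apply bo_add; [apply (H1 r)|apply (H2 r)]].
  intros; simpl. rewrite T_add. ring. Qed.

Lemma asy_scale D f F c : asyD D f F -> asyD D (fun x => c * f x) (fps_scale c F).
Proof. intros H1 r. eapply bo_ext; [|apply (bo_scal D r (fun x => f x - trunc_eval F x r) c); apply (H1 r)].
  intros; simpl. rewrite T_scale. ring. Qed.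

Lemma asy_poly D F k : (forall n, (k <= n)%nat -> F n = 0) -> asyD D (fun x => trunc_eval F x k) F.
Proof.
  intros HF r. destruct (Nat.le_gt_cases k r).
  - eapply bo_ext; [|apply bo_zero]. intros. rewrite !T_sumn.
    rewrite (sumn_zero_tail _ k r); auto; [ring|]. intros. rewrite HF; [ring|lia].
  - apply bo_tail; lia.
Qed.

Lemma asy_X D : asyD D (fun x => x) fps_X.
Proof. eapply asy_ext; [| |apply (asy_poly D fps_X 2)]. intros; simpl; unfold fps_X; simpl; ring.
  auto. intros. unfold fps_X. destruct (Nat.eqb_spec n 1); auto; lia. Qed.

Lemma asy_const D c : asyD D (fun _ => c) (fps_const c).
Proof. eapply asy_ext; [| |apply (asy_poly D (fps_const c) 1)]. intros; simpl; unfold fps_const; simpl; ring.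
  auto. intros. unfold fps_const. destruct (Nat.eqb_spec n 0); auto; lia. Qed.

Lemma asy_Xpow D f F k : asyD D f F -> asyD D (fun x => x ^ k * f x) (fps_Xpow k F).
Proof.
  intros H r. destruct (Nat.le_gt_cases r k).
  - eapply bo_ext; [|apply bo_mono with (r := (k + 0)%nat); [apply bo_mul; [apply bo_powx|apply (asy_bounded _ _ _ H)]|lia]].
    intros. rewrite T_Xpow_low by auto. ring.
  - replace r with (k + (r - k))%nat by lia. eapply bo_ext; [|apply bo_mul; [apply bo_powx|apply (H (r-k)%nat)]].
    intros. rewrite T_Xpow_high. ring.
Qed.

Lemma asy_divX D f F : (forall x, D x -> x <> 0) -> F 0%nat = 0 -> asyD D f F ->
  asyD D (fun x => f x / x) (fps_divX F).
Proof.
  intros HD F0 H r. destruct (bo_pos _ _ _ (H (S r))) as [C [d [Hd [HC B]]]].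
  exists C, d. split; auto. intros x Hx Dx. specialize (B x Hx Dx). specialize (HD x Dx).
  rewrite T_divX, F0 in B.
  replace (f x / x - trunc_eval (fps_divX F) x r) with ((f x - (0 + x * trunc_eval (fps_divX F) x r)) / x)
    by (field; auto).
  unfold Rdiv. rewrite Rabs_mult, Rabs_inv. simpl in B.
  apply Rmult_le_reg_r with (Rabs x). apply Rabs_pos_lt; auto.
  rewrite Rmult_assoc, Rinv_l by (apply Rabs_no_R0; auto). nra.
Qed.

Lemma T_sum F x N : trunc_eval F x (S N) = sum_f_R0 (fun i => F i * x ^ i) N.
Proof. rewrite T_sumn, sum_f_R0_sumn. reflexivity. Qed.

Lemma poly_mul_bo D F G N : boD D (S N) (fun x => trunc_eval F x (S N) * trunc_eval G x (S N)
   - trunc_eval (fps_mul F G) x (S N)).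
Proof.
  destruct N.
  - eapply bo_ext; [|apply bo_zero]. intros. simpl. unfold fps_mul. simpl. ring.
  - eapply bo_ext; [|apply (bo_sum D (S (S N)) (fun k x => sum_f_R0 (fun l => F (S (l+k)) * x^(S(l+k)) * (G (S N - l)%nat * x^(S N - l))) (pred (S N - k))) (pred (S N)))].
    + intros x. simpl (pred (S N)). rewrite !T_sum.
      rewrite (cauchy_finite (fun i => F i * x ^ i) (fun i => G i * x ^ i) (S N)) by lia.
      simpl (Init.Nat.pred (S N)).
      assert (E : sum_f_R0 (fun k => sum_f_R0 (fun p => F p * x ^ p * (G (k - p)%nat * x ^ (k - p))) k) (S N)
                 = sum_f_R0 (fun i => fps_mul F G i * x ^ i) (S N)).
      { apply sum_eq. intros k Hk. unfold fps_mul. rewrite Rmult_comm, scal_sum. apply sum_eq.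
        intros p Hp. replace (x ^ k) with (x ^ p * x ^ (k - p)).
        ring. rewrite <- pow_add. f_equal. lia. }
      rewrite E. ring.
    + intros k Hk. apply bo_sum. intros l Hl.
      eapply bo_ext; [|apply bo_mono with (r := (S(l+k) + (S N - l))%nat);
        [apply (bo_scal D _ (fun x => x^(S(l+k)+(S N - l))) (F (S(l+k)) * G (S N - l)%nat)), bo_powx | lia]].
      intros; cbv beta; rewrite pow_add; ring.
Qed.

Lemma asy_mul D f g F G : asyD D f F -> asyD D g G -> asyD D (fun x => f x * g x) (fps_mul F G).
Proof.
  intros H1 H2 r. destruct r.
  - eapply bo_ext; [|apply bo_mul0; [apply (asy_bounded _ _ _ H1)|apply (asy_bounded _ _ _ H2)]].
    intros; simpl; ring.
  - eapply bo_ext; [|apply bo_add; [apply bo_add; [apply bo_mul0; [apply (H1 (S r))|apply (asy_bounded _ _ _ H2)]|apply (bo_mul D 0 (S r)); [apply (bo_T D F (S r))|apply (H2 (S r))]]|apply (poly_mul_bo D F G r)]].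
    intros x. cbv beta. ring.
Qed.

Lemma asy_pow D g G m : asyD D g G -> asyD D (fun x => g x ^ m) (fps_pow G m).
Proof.
  intros H. induction m.
  - change (asyD D (fun _ => 1) (fps_const 1)). apply asy_const.
  - apply (asy_mul D g (fun x => g x ^ m)); auto.
Qed.

Lemma pow_val G m n : G 0%nat = 0 -> (n < m)%nat -> fps_pow G m n = 0.
Proof.
  intros G0. revert n. induction m; intros n Hn; [lia|].
  simpl. unfold fps_mul. rewrite sum_f_R0_sumn. apply Rminus_diag_uniq. rewrite Rminus_0_r.
  transitivity (sumn (fun _ => 0) (S n)).
  - apply sumn_ext. intros i Hi. destruct i. rewrite G0; ring. rewrite IHm; [ring|lia].
  - clear. induction (S n); simpl; [auto| rewrite IHn0; ring].
Qed.

Lemma sumn_sub f g k : sumn (fun i => f i - g i) k = sumn f k - sumn g k.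
Proof. induction k; simpl; [ring|rewrite IHk; ring]. Qed.

Lemma asy_comp D f g F G : asyD (fun _ => True) f F -> asyD D g G -> G 0%nat = 0 ->
  asyD D (fun x => f (g x)) (fps_comp F G).
Proof.
  intros Hf Hg G0 r.
  assert (Hg1 : boD D 1 g).
  { eapply bo_ext; [|apply (Hg 1%nat)]. intros; simpl. rewrite G0. ring. }
  destruct (bo_pos _ _ _ Hg1) as [C1 [d1 [Hd1 [HC1 B1]]]].
  destruct (bo_pos _ _ _ (Hf r)) as [C2 [d2 [Hd2 [HC2 B2]]]].
  assert (T1 : boD D r (fun x => f (g x) - trunc_eval F (g x) r)).
  { exists (C2 * C1 ^ r), (Rmin d1 (d2 / (C1 + 1))). split.
    apply Rmin_pos; auto. apply Rdiv_lt_0_compat; lra.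
    intros x Hx Dx. pose proof (Rmin_l d1 (d2 / (C1 + 1))). pose proof (Rmin_r d1 (d2 / (C1 + 1))).
    specialize (B1 x ltac:(lra) Dx). simpl in B1. rewrite Rmult_1_r in B1.
    assert (Hgx : Rabs (g x) < d2).
    { eapply Rle_lt_trans; [apply B1|]. assert (Rabs x * (C1 + 1) < d2).
      { apply Rmult_lt_reg_r with (/ (C1 + 1)). apply Rinv_0_lt_compat; lra.
        rewrite Rmult_assoc, Rinv_r by lra. rewrite Rmult_1_r. unfold Rdiv in *. lra. }
      pose proof (Rabs_pos x). nra. }
    eapply Rle_trans; [apply B2; auto|]. rewrite Rmult_assoc. apply Rmult_le_compat_l; auto.
    rewrite <- Rpow_mult_distr. apply pow_incr. split; [apply Rabs_pos|lra]. }
  assert (T2 : boD D r (fun x => trunc_eval F (g x) r - sumn (fun m => F m * trunc_eval (fps_pow G m) x r) r)).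
  { eapply bo_ext; [|apply (bo_sumn D r (fun m x => F m * (g x ^ m - trunc_eval (fps_pow G m) x r)) r)].
    intros x. cbv beta. rewrite T_sumn, <- sumn_sub. apply sumn_ext; intros; ring.
    intros i Hi. apply bo_scal. apply (asy_pow D g G i Hg). }
  eapply bo_ext; [|apply (bo_add D r _ _ T1 T2)].
  intros x. cbv beta. 
  assert (E : sumn (fun m => F m * trunc_eval (fps_pow G m) x r) r = trunc_eval (fps_comp F G) x r).
  { rewrite T_sumn. 
    transitivity (sumn (fun m => sumn (fun n => F m * fps_pow G m n * x ^ n) r) r).
    apply sumn_ext; intros. rewrite T_sumn, sumn_scal. apply sumn_ext; intros; ring.
    rewrite sumn_swap. apply sumn_ext. intros n Hn. unfold fps_comp. rewrite sum_f_R0_sumn.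
    rewrite Rmult_comm, sumn_scal.
    rewrite (sumn_zero_tail _ (S n) r) by (auto; intros; rewrite pow_val by (auto; lia); ring).
    apply sumn_ext; intros; ring. }
  rewrite E. ring.
Qed.

Lemma dpl_ext f g x l l' : (forall y, f y = g y) -> l = l' -> derivable_pt_lim f x l -> derivable_pt_lim g x l'.
Proof. intros E El H eps He. destruct (H eps He) as [d Hd]. exists d. intros h h0 hd.
  rewrite <- !E, <- El. auto. Qed.

Lemma dpl_1p F x l : derivable_pt_lim F (1 + x) l -> derivable_pt_lim (fun y => F (1 + y)) x l.
Proof. intros H eps He. destruct (H eps He) as [d Hd]. exists d. intros h h0 hd.
  replace (1 + (x + h)) with (1 + x + h) by ring. auto. Qed.

Lemma deriv_bounded D f l : derivable_pt_lim f 0 l -> boD D 0 f.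
Proof.
  intros H. destruct (H 1 Rlt_0_1) as [d Hd].
  exists (Rabs (f 0) + Rabs l + 1), (Rmin d 1). split. apply Rmin_pos; [apply cond_pos|lra].
  intros x Hx _. pose proof (Rmin_l d 1); pose proof (Rmin_r d 1). simpl. rewrite Rmult_1_r.
  destruct (Req_dec x 0) as [->|Hx0]. pose proof (Rabs_pos l). lra.
  specialize (Hd x Hx0 ltac:(lra)). rewrite Rplus_0_l in Hd.
  set (q := (f x - f 0) / x) in *.
  assert (E : f x = f 0 + q * x) by (unfold q; field; auto). rewrite E.
  eapply Rle_trans; [apply Rabs_triang|]. rewrite Rabs_mult.
  assert (Rabs q <= Rabs l + 1).
  { replace q with (l + (q - l)) by ring. eapply Rle_trans; [apply Rabs_triang|]. lra. }
  pose proof (Rabs_pos q). pose proof (Rabs_pos x). nra.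
Qed.

Lemma T_deriv I y r : derivable_pt_lim (fun y => trunc_eval I y (S r)) y
   (trunc_eval (fun k => INR (S k) * I (S k)) y r).
Proof.
  induction r.
  - eapply dpl_ext; [| |apply (derivable_pt_lim_const (0 + I 0%nat * 1) y)]; intros; simpl; auto; ring.
  - eapply dpl_ext; [| |apply (derivable_pt_lim_plus _ _ _ _ _ IHr
        (derivable_pt_lim_scal _ (I (S r)) _ _ (derivable_pt_lim_pow y (S r))))].
    intros; simpl; unfold plus_fct, mult_real_fct; reflexivity.
    simpl. ring.
Qed.

Lemma mvt_abs_le c x : Rmin 0 x <= c <= Rmax 0 x -> Rabs c <= Rabs x.
Proof. unfold Rmin, Rmax. destruct (Rle_dec 0 x); intros; unfold Rabs;
  destruct (Rcase_abs c); destruct (Rcase_abs x); lra. Qed.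

Lemma ode_step f h H I r rho : 0 < rho -> (forall y, Rabs y < rho -> derivable_pt_lim f y (h y)) ->
  I 0%nat = f 0 -> (forall k, I (S k) = H k / INR (S k)) ->
  boD (fun _ => True) r (fun x => h x - trunc_eval H x r) ->
  boD (fun _ => True) (S r) (fun x => f x - trunc_eval I x (S r)).
Proof.
  intros Hrho Hd I0 IS Hb. destruct (bo_pos _ _ _ Hb) as [C [d [Hd0 [HC B]]]].
  exists C, (Rmin d rho). split; [apply Rmin_pos; auto|]. intros x Hx _.
  pose proof (Rmin_l d rho); pose proof (Rmin_r d rho).
  assert (Hder : forall c, Rmin 0 x <= c <= Rmax 0 x ->
     derivable_pt_lim (fun y => f y - trunc_eval I y (S r)) c (h c - trunc_eval H c r)).
  { intros c Hc. pose proof (mvt_abs_le c x Hc).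
    eapply dpl_ext; [| |apply (derivable_pt_lim_minus _ _ _ _ _ (Hd c ltac:(lra)) (T_deriv I c r))].
    intros; reflexivity. apply f_equal. apply T_ext. intros n _. rewrite IS. field.
    apply not_0_INR. lia. }
  destruct (MVT_abs _ _ 0 x Hder) as [c [Ec Hc]]. pose proof (mvt_abs_le c x Hc).
  rewrite T_at0, I0 in Ec. replace (f x - trunc_eval I x (S r) - (f 0 - f 0)) with (f x - trunc_eval I x (S r)) in Ec by ring. rewrite Rminus_0_r in Ec.
  rewrite Ec. specialize (B c ltac:(lra) Logic.I). simpl.
  pose proof (Rabs_pos x).
  assert (C * Rabs c ^ r <= C * Rabs x ^ r).
  { apply Rmult_le_compat_l; auto. apply pow_incr. split; [apply Rabs_pos|auto]. }
  pose proof (Rabs_pos (h c - trunc_eval H c r)). nra.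
Qed.

Lemma asy_exp : asyD (fun _ => True) exp exp_series.
Proof.
  intros r. induction r.
  - eapply bo_ext; [|apply (deriv_bounded _ exp _ (derivable_pt_lim_exp 0))]. intros; simpl; ring.
  - apply (ode_step exp exp exp_series exp_series r 1); auto; [lra| | |].
    + intros; apply derivable_pt_lim_exp.
    + unfold exp_series. simpl. rewrite exp_0. field.
    + intros k. unfold exp_series. change (fact (S k)) with (S k * fact k)%nat. rewrite mult_INR.
      field. split. apply INR_fact_neq_0. apply not_0_INR. lia.
Qed.

Definition geo_series : fps := fun k => (-1) ^ k.

Lemma T_geo y r : (1 + y) * trunc_eval geo_series y r = 1 - (-1) ^ r * y ^ r.
Proof. induction r; simpl; [ring|]. rewrite Rmult_plus_distr_l, IHr. unfold geo_series. ring. Qed.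

Lemma asy_inv1p : asyD (fun _ => True) (fun y => / (1 + y)) geo_series.
Proof.
  intros r. exists 2, (1/2). split; [lra|]. intros y Hy _.
  assert (Hy' : 1/2 < 1 + y) by (unfold Rabs in Hy; destruct (Rcase_abs y); lra).
  replace (/ (1 + y) - trunc_eval geo_series y r) with ((-1) ^ r * y ^ r / (1 + y)).
  2:{ apply Rmult_eq_reg_l with (1 + y); [|lra]. rewrite Rmult_minus_distr_l, T_geo. field. lra. }
  unfold Rdiv. rewrite !Rabs_mult, pow_1_abs, Rabs_inv, <- RPow_abs.
  rewrite (Rabs_right (1 + y)) by lra.
  assert (/ (1 + y) <= 2).
  { apply Rmult_le_reg_l with (1 + y); [lra|]. rewrite Rinv_r; lra. }
  pose proof (pow_le (Rabs y) r (Rabs_pos y)). pose proof (Rinv_0_lt_compat (1 + y) ltac:(lra)). nra.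
Qed.

Lemma dpl_ln1p y : -1 < y -> derivable_pt_lim (fun y => ln (1 + y)) y (/ (1 + y)).
Proof. intros. apply dpl_1p. apply derivable_pt_lim_ln. lra. Qed.

Lemma asy_log1p : asyD (fun _ => True) (fun y => ln (1 + y)) log1p_series.
Proof.
  intros r. destruct r.
  - eapply bo_ext; [|apply (deriv_bounded _ _ _ (dpl_ln1p 0 ltac:(lra)))]. intros; simpl; ring.
  - apply (ode_step _ (fun y => / (1 + y)) geo_series log1p_series r 1); auto; [lra| | |apply asy_inv1p].
    + intros y Hy. apply dpl_ln1p. unfold Rabs in Hy; destruct (Rcase_abs y); lra.
    + simpl. rewrite Rplus_0_r, ln_1. reflexivity.
Qed.

Lemma falling_S c k : falling c (S k) = c * falling (c - 1) k.
Proof. induction k; simpl; [ring|]. simpl in IHk. rewrite IHk. destruct k; simpl; ring. Qed.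

Lemma dpl_rpow1p c y : -1 < y -> derivable_pt_lim (fun y => Rpower (1 + y) c) y (c * Rpower (1 + y) (c - 1)).
Proof. intros. apply (dpl_1p (fun z => Rpower z c)). apply derivable_pt_lim_power. lra. Qed.

Lemma asy_rpow1p c : asyD (fun _ => True) (fun y => Rpower (1 + y) c) (binom_series c).
Proof.
  intros r. revert c. induction r; intros c.
  - eapply bo_ext; [|apply (deriv_bounded _ _ _ (dpl_rpow1p c 0 ltac:(lra)))]. intros; simpl; ring.
  - apply (ode_step _ (fun y => c * Rpower (1 + y) (c - 1)) (fps_scale c (binom_series (c - 1))) _ r 1);
      auto; [lra| | | |].
    + intros y Hy. apply dpl_rpow1p. unfold Rabs in Hy; destruct (Rcase_abs y); lra.
    + unfold binom_series, gbinom, Rpower. simpl. rewrite Rplus_0_r, ln_1, Rmult_0_r, exp_0. field.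
    + intros k. unfold binom_series, gbinom, fps_scale. rewrite falling_S.
      change (fact (S k)) with (S k * fact k)%nat. rewrite mult_INR.
      field. split. apply INR_fact_neq_0. apply not_0_INR. lia.
    + eapply bo_ext; [|apply (bo_scal _ r _ c (IHr (c - 1)))]. intros; cbv beta. rewrite T_scale. ring.
Qed.

Definition Dn : R -> Prop := fun x => x <> 0.

Definition mjzS (j : nat) : fps := fps_scale (- INR j) fps_X.

Lemma asy_mjz j : asyD Dn (fun x => - INR j * x) (mjzS j).
Proof. apply (asy_scale Dn (fun x => x)). apply asy_X. Qed.

Lemma mjz0 j : mjzS j 0%nat = 0.
Proof. unfold mjzS, fps_scale, fps_X. simpl. ring. Qed.

Lemma asy_Rp j c : asyD Dn (fun x => Rpower (1 + - INR j * x) c) (fps_rpow1p (mjzS j) c).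
Proof. apply (asy_comp Dn (fun y => Rpower (1 + y) c) (fun x => - INR j * x)).
  apply asy_rpow1p. apply asy_mjz. apply mjz0. Qed.

Definition innerS (alpha j : nat) : fps :=
  fps_scale (INR alpha) (fps_divX (fps_add (fps_log1p (mjzS j)) (fps_scale (INR j) fps_X))).

Lemma asy_inner alpha j : asyD Dn (fun x => INR alpha * ((ln (1 + - INR j * x) + INR j * x) / x)) (innerS alpha j).
Proof.
  apply (asy_scale Dn (fun x => (ln (1 + - INR j * x) + INR j * x) / x)).
  apply (asy_divX Dn (fun x => ln (1 + - INR j * x) + INR j * x)).
  - unfold Dn; auto.
  - unfold fps_add, fps_log1p, fps_comp, fps_scale, fps_X. simpl. ring.
  - apply asy_add. apply (asy_comp Dn (fun y => ln (1 + y)) (fun x => - INR j * x)).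
    apply asy_log1p. apply asy_mjz. apply mjz0.
    apply (asy_scale Dn (fun x => x)). apply asy_X.
Qed.

Lemma inner0 alpha j : innerS alpha j 0%nat = 0.
Proof. unfold innerS, mjzS, fps_add, fps_log1p, fps_comp, fps_scale, fps_X, fps_divX, fps_mul, fps_const, log1p_series.
  simpl. unfold fps_mul, fps_const. simpl. field. Qed.

Lemma asy_E alpha j : asyD Dn (fun x => exp (INR alpha * ((ln (1 + - INR j * x) + INR j * x) / x)))
   (fps_exp (innerS alpha j)).
Proof. apply (asy_comp Dn exp). apply asy_exp. apply asy_inner. apply inner0. Qed.

Definition psiS j : fps := fps_mul fps_X (fps_rpow1p (mjzS j) (-1)).

Lemma asy_psi j : asyD Dn (fun x => x * Rpower (1 + - INR j * x) (-1)) (psiS j).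
Proof. apply (asy_mul Dn (fun x => x)). apply asy_X. apply asy_Rp. Qed.

Lemma psi0 j : psiS j 0%nat = 0.
Proof. unfold psiS, fps_mul, fps_X. simpl. ring. Qed.

Definition truncS (A : fps) (r : nat) : fps := fun n => if (n <? r)%nat then A n else 0.

Lemma asy_P A r j : asyD Dn (fun x => trunc_eval A (x * Rpower (1 + - INR j * x) (-1)) r)
   (fps_comp (truncS A r) (psiS j)).
Proof.
  apply (asy_comp Dn (fun y => trunc_eval A y r)).
  - eapply asy_ext; [| |apply (asy_poly _ (truncS A r) r)].
    + intros. apply T_ext. intros. unfold truncS. destruct (Nat.ltb_spec n r); auto; lia.
    + auto.
    + intros. unfold truncS. destruct (Nat.ltb_spec n r); auto; lia.
  - apply asy_psi.
  - apply psi0.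
Qed.

Definition Kc (alpha : nat) (beta : R) (j : nat) := exp (- (INR alpha * INR j)) * / beta ^ j.

Definition Rpf (alpha : nat) (gamma : R) (j : nat) (x : R) := Rpower (1 + - INR j * x) (gamma - INR alpha * INR j).
Definition Ef (alpha j : nat) (x : R) := exp (INR alpha * ((ln (1 + - INR j * x) + INR j * x) / x)).
Definition psif (j : nat) (x : R) := x * Rpower (1 + - INR j * x) (-1).

Definition Phi alpha beta gamma j (x : R) := Kc alpha beta j * (x ^ (alpha * j) * (Rpf alpha gamma j x * Ef alpha j x)).
Definition Gf alpha beta gamma A j r (x : R) :=
  Kc alpha beta j * (x ^ (alpha * j) * (Rpf alpha gamma j x * (Ef alpha j x * trunc_eval A (psif j x) r))).

Definition GS alpha beta gamma A j r :=
  fps_scale (Kc alpha beta j) (fps_Xpow (alpha * j) (fps_mul (fps_rpow1p (mjzS j) (gamma - INR alpha * INR j))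
     (fps_mul (fps_exp (innerS alpha j)) (fps_comp (truncS A r) (psiS j))))).

Lemma asy_G alpha beta gamma A j r : asyD Dn (Gf alpha beta gamma A j r) (GS alpha beta gamma A j r).
Proof.
  unfold Gf, GS. apply (asy_scale Dn (fun x => x ^ (alpha * j) * (Rpf alpha gamma j x * (Ef alpha j x * trunc_eval A (psif j x) r)))).
  apply (asy_Xpow Dn (fun x => Rpf alpha gamma j x * (Ef alpha j x * trunc_eval A (psif j x) r))).
  apply (asy_mul Dn (Rpf alpha gamma j) (fun x => Ef alpha j x * trunc_eval A (psif j x) r)).
  apply asy_Rp. apply (asy_mul Dn (Ef alpha j) (fun x => trunc_eval A (psif j x) r)).
  apply asy_E. apply asy_P.
Qed.

Lemma Phi_bounded alpha beta gamma j : boD Dn 0 (Phi alpha beta gamma j).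
Proof.
  unfold Phi. apply (asy_bounded Dn _ (fps_scale (Kc alpha beta j) (fps_Xpow (alpha * j)
     (fps_mul (fps_rpow1p (mjzS j) (gamma - INR alpha * INR j)) (fps_exp (innerS alpha j)))))).
  apply (asy_scale Dn (fun x => x ^ (alpha * j) * (Rpf alpha gamma j x * Ef alpha j x))).
  apply (asy_Xpow Dn (fun x => Rpf alpha gamma j x * Ef alpha j x)).
  apply (asy_mul Dn (Rpf alpha gamma j) (Ef alpha j)). apply asy_Rp. apply asy_E.
Qed.

Definition agree (r : nat) (F G : fps) := forall n, (n < r)%nat -> F n = G n.

Lemma agree_scale r c F G : agree r F G -> agree r (fps_scale c F) (fps_scale c G).
Proof. intros H n Hn. unfold fps_scale. rewrite H; auto. Qed.

Lemma agree_Xpow r k F G : agree r F G -> agree r (fps_Xpow k F) (fps_Xpow k G).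
Proof. intros H n Hn. unfold fps_Xpow. destruct (Nat.leb_spec k n); auto. rewrite H; auto; lia. Qed.

Lemma agree_mul r F G F' G' : agree r F F' -> agree r G G' -> agree r (fps_mul F G) (fps_mul F' G').
Proof. intros H1 H2 n Hn. unfold fps_mul. apply sum_eq. intros. rewrite H1, H2; auto; lia. Qed.

Lemma agree_refl r F : agree r F F.
Proof. intros n _; auto. Qed.

Lemma agree_comp r A P : agree r (fps_comp (truncS A r) P) (fps_comp A P).
Proof. intros n Hn. unfold fps_comp. apply sum_eq. intros. unfold truncS.
  destruct (Nat.ltb_spec i r); auto; lia. Qed.

Lemma agree_GS alpha beta gamma A j r : agree r (GS alpha beta gamma A j r) (A_shift alpha beta gamma A j).
Proof.
  unfold GS, A_shift, Kc. cbv zeta. apply agree_scale, agree_Xpow, agree_mul; [apply agree_refl|].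
  apply agree_mul; [apply agree_refl|]. apply agree_comp.
Qed.

Lemma psif_eq j n : (j < n)%nat -> psif j (/ INR n) = / INR (n - j).
Proof.
  intros H. unfold psif. assert (HN : 0 < INR n) by (apply lt_0_INR; lia).
  assert (HM : 0 < INR (n - j)) by (apply lt_0_INR; lia).
  rewrite minus_INR in * by lia.
  replace (1 + - INR j * / INR n) with ((INR n - INR j) / INR n) by (field; lra).
  replace (-1) with (- (1)) by ring. rewrite Rpower_Ropp, Rpower_1 by (apply Rdiv_lt_0_compat; lra). field. lra.
Qed.

Lemma scale_shift alpha beta gamma j n : (j < n)%nat -> 0 < beta ->
  scale_seq alpha beta gamma (n - j) = scale_seq alpha beta gamma n * Phi alpha beta gamma j (/ INR n).
Proof.
  intros H Hb. assert (HN : 0 < INR n) by (apply lt_0_INR; lia).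
  assert (HM : 0 < INR (n - j)) by (apply lt_0_INR; lia).
  assert (EM : INR (n - j) = INR n - INR j) by (apply minus_INR; lia).
  assert (E1 : 1 + - INR j * / INR n = INR (n - j) * / INR n) by (rewrite EM; field; lra).
  assert (Lq : ln (1 + - INR j * / INR n) = ln (INR (n - j)) - ln (INR n)).
  { rewrite E1, ln_mult, ln_Rinv; try lra. apply Rinv_0_lt_compat; lra. }
  unfold scale_seq, Phi, Kc, Rpf, Ef.
  rewrite <- (Rpower_pow (alpha * (n - j)) (INR (n - j))) by lra.
  rewrite <- (Rpower_pow (alpha * n) (INR n)) by lra.
  rewrite <- (Rpower_pow (alpha * j) (/ INR n)) by (apply Rinv_0_lt_compat; lra).
  assert (Eb : beta ^ n = beta ^ (n - j) * beta ^ j) by (rewrite <- pow_add; f_equal; lia).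
  rewrite Eb. unfold Rpower. rewrite Lq. rewrite ln_Rinv by lra.
  assert (Hj : beta ^ j <> 0) by (apply pow_nonzero; lra).
  rewrite !mult_INR. rewrite EM.
  match goal with |- exp ?e1 * ?B * exp ?e2 = exp ?e3 * (?B * ?Bj) * exp ?e4 * (exp ?e5 * / ?Bj * (exp ?e6 * (exp ?e7 * exp ?e8))) =>
    transitivity (exp (e3+e4+e5+e6+e7+e8) * B); [replace (e3+e4+e5+e6+e7+e8) with (e1 + e2) | rewrite !exp_plus; field; auto] end.
  rewrite exp_plus; ring.
  field. lra.
Qed.

Theorem lemma11 (alpha : nat) (beta gamma : R) (a : nat -> R) (A : fps) :
  (0 < alpha)%nat -> 0 < beta ->
  (exists k : nat, A k <> 0) ->
  asymp_expansion a (scale_seq alpha beta gamma) A ->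
  forall j : nat,
    asymp_expansion (fun n => a (n - j)%nat) (scale_seq alpha beta gamma)
      (A_shift alpha beta gamma A j).
Proof.
  intros Ha Hb _ Hasy j r.
  destruct (Hasy r) as [C [N1 HC]].
  destruct (bo_pos _ _ _ (asy_G alpha beta gamma A j r r)) as [CG [dG [HdG [HCG BG]]]].
  destruct (bo_pos _ _ _ (Phi_bounded alpha beta gamma j)) as [M [dP [HdP [HM BP]]]].
  pose proof (Rmin_l dG dP); pose proof (Rmin_r dG dP).
  assert (Hd : 0 < Rmin dG dP) by (apply Rmin_pos; auto).
  destruct (INR_unbounded (/ Rmin dG dP)) as [N2 HN2].
  set (Cm := Rmax C 0).
  exists (Cm * M * 2 ^ r + CG), (N1 + j + 2 * j + N2 + 1)%nat.
  intros n Hn.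
  set (s := scale_seq alpha beta gamma).
  assert (HN : 0 < INR n) by (apply lt_0_INR; lia).
  set (x := / INR n).
  assert (Hx : 0 < x) by (apply Rinv_0_lt_compat; lra).
  assert (Hxd : x < Rmin dG dP).
  { unfold x. assert (INR N2 <= INR n) by (apply le_INR; lia).
    rewrite <- (Rinv_inv (Rmin dG dP)). apply Rinv_lt_contravar.
    apply Rmult_lt_0_compat; auto. apply Rinv_0_lt_compat; auto. lra. }
  assert (Hax : Rabs x = x) by (apply Rabs_right; lra).
  assert (Hx0 : Dn x) by (unfold Dn; lra).
  specialize (HC (n - j)%nat ltac:(lia)).
  rewrite (scale_shift alpha beta gamma j n) in HC by (auto; lia).
  rewrite <- (psif_eq j n) in HC by lia. fold s x in HC.
  specialize (BG x ltac:(lra) Hx0). specialize (BP x ltac:(lra) Hx0).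
  simpl in BP. rewrite Rmult_1_r in BP.
  assert (ET : trunc_eval (A_shift alpha beta gamma A j) x r = trunc_eval (GS alpha beta gamma A j r) x r).
  { apply T_ext. intros. symmetry. apply agree_GS; auto. }
  assert (EG : Gf alpha beta gamma A j r x = Phi alpha beta gamma j x * trunc_eval A (psif j x) r).
  { unfold Gf, Phi. ring. }
  fold s x. rewrite ET.
  replace (a (n - j)%nat - s n * trunc_eval (GS alpha beta gamma A j r) x r) with
    ((a (n - j)%nat - s n * Phi alpha beta gamma j x * trunc_eval A (psif j x) r) +
     s n * (Gf alpha beta gamma A j r x - trunc_eval (GS alpha beta gamma A j r) x r))
    by (rewrite EG; ring).
  eapply Rle_trans; [apply Rabs_triang|]. rewrite Rabs_mult.
  rewrite Hax in BG.
  set (P := Phi alpha beta gamma j x) in *.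
  assert (Hpsi : 0 <= psif j x <= 2 * x).
  { unfold x. rewrite psif_eq by lia. assert (HM' : 0 < INR (n - j)) by (apply lt_0_INR; lia).
    rewrite minus_INR in * by lia. assert (INR j * 2 <= INR n).
    { replace 2 with (INR 2) by (simpl; ring). rewrite <- mult_INR. apply le_INR. lia. }
    split. left. apply Rinv_0_lt_compat. lra.
    apply Rmult_le_reg_l with (INR n - INR j); [lra|]. rewrite Rinv_r by lra.
    apply Rmult_le_reg_l with (INR n); [lra|]. field_simplify; lra. }
  assert (Hp : psif j x ^ r <= 2 ^ r * x ^ r).
  { rewrite <- Rpow_mult_distr. apply pow_incr. lra. }
  assert (Hp0 : 0 <= psif j x ^ r) by (apply pow_le; lra).
  assert (Hs : Rabs (s n * P) <= Rabs (s n) * M) by (rewrite Rabs_mult; apply Rmult_le_compat_l; auto; apply Rabs_pos).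
  assert (HC' : Rabs (a (n - j)%nat - s n * P * trunc_eval A (psif j x) r) <= Cm * (Rabs (s n) * M) * (2 ^ r * x ^ r)).
  { eapply Rle_trans; [apply HC|].
    assert (0 <= Rabs (s n * P)) by apply Rabs_pos.
    assert (C <= Cm) by apply Rmax_l. assert (0 <= Cm) by apply Rmax_r.
    apply Rle_trans with (Cm * Rabs (s n * P) * psif j x ^ r).
    { apply Rmult_le_compat_r; auto. apply Rmult_le_compat_r; auto. }
    apply Rmult_le_compat; auto. apply Rmult_le_pos; auto. apply Rmult_le_compat_l; auto. }
  assert (0 <= Rabs (s n)) by apply Rabs_pos.
  assert (0 <= x ^ r) by (apply pow_le; lra).
  replace ((Cm * M * 2 ^ r + CG) * Rabs (s n) * x ^ r) with
    (Cm * (Rabs (s n) * M) * (2 ^ r * x ^ r) + Rabs (s n) * (CG * x ^ r)) by ring.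
  apply Rplus_le_compat; auto. apply Rmult_le_compat_l; auto.
Qed.
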